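(* For $w\in S_n$, $$\Delta(\bar\chi^w)=\sum\bar\chi^{\,y_B}\otimes\bar\chi^{\,u_A},$$ the sum over all decompositions $A\sqcup B=\{1,\dots,n\}$ such that $\iota(w)_B$ is an inversion table, where $y_B\in S_{|B|}$ is the permutation with inversion table $\iota(w)_B$ and $u_A\in S_{|A|}$ is the permutation whose dual inversion table is the componentwise minimum $\iota^\vee(w)_A\wedge\iota^\vee(\mathrm{id}_{|A|})$, i.e. writing $A=\{a_1<\dots<a_r\}$, $\iota^\vee_k(u_A)=\min(n-a_k-\iota_{a_k}(w),\,r-k)$ for $1\le k\le r$.
   Context: Let $q$ be a prime power, $\mathfrak{ut}_N$ the additive group of strictly upper triangular $N\times N$ matrices over $\mathbb{F}_q$, $e_{ij}(t)$ the matrix with $t$ at $(i,j)$ and zeros elsewhere. For $w\in S_N$: $\iota_k(w)=\#\{i<w^{-1}(k):w(i)>k\}$ (inversion table) and $\iota^\vee_k(w)=N-k-\iota_k(w)$ (dual inversion table); a sequence $(c_1,\dots,c_\ell)$ is an inversion table iff $0\le c_k\le\ell-k$ for all $k$, and then it determines a unique permutation of $S_\ell$; similarly a dual inversion table. For $B=\{b_1<\dots<b_\ell\}$, $\iota(w)_B=(\iota_{b_1}(w),\dots,\iota_{b_\ell}(w))$. $\mathfrak{ut}_w=\{x:x_{ij}\ne0\Rightarrow0<j-i\le\iota_i(w)\}$; these form a lattice of subgroups whose normal lattice supercharacter theory has supercharacters $\chi^w=\sum_\psi\psi(1)\psi$ over irreducible $\psi$ with $\mathfrak{ut}_w$ the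 largest lattice member in $\ker\psi$; $\mathrm{scf}(\mathfrak{ut}_N)$ is their span. $\bar\chi^w$ is the character of $\mathrm{Ind}_{\mathfrak{ut}_w}^{\mathfrak{ut}_N}(\mathbf 1)$, equal to $\sum_{v:\mathfrak{ut}_v\supseteq\mathfrak{ut}_w}\chi^v$. For $A\subseteq\{1,\dots,N\}$ with $|A|=k$, $m=N-k$: with $c_i=N-\#\{a\in A:a>i\}$ let $U_A=\{(i,j):i\in A,j>c_i\}$, $L_A=\{(i,j):i\in A,j\le c_i\}$, $U_A^\vee=\{(i,j):i\notin A,j\le c_i\}$, $R_A=\{(i,j):i\notin A,j>c_i\}$ (with $i<j$), and $\mathfrak{ut}_A,\mathfrak{l}_A,\mathfrak{ut}_A^\vee,\mathfrak{r}_A$ the subgroups supported on them; identify $\mathfrak{ut}_A^\vee\cong\mathfrak{ut}_m$ via $e_{ij}(t)\mapsto e_{i-s,j-s}(t)$, $s=\#\{a\in A:a<i\}$, and $\mathfrak{ut}_A\cong\mathfrak{ut}_k$ via $e_{ij}(t)\mapsto e_{i-\#\{b<i:b\notin A\},j-m}(t)$. $\mathrm{Dela}_A(\gamma)(u',u)=q^{-|L_A|-|R_A|}\sum_{l\in\mathfrak{l}_A,r\in\mathfrak{r}_A}(\frac{-1}{q-1})^{\#\{(i,j):r_{ij}\ne0\}}\gamma(l+u'+u+r)$, an element of $\mathrm{scf}(\mathfrak{ut}_m)\otimes\mathrm{scf}(\mathfrak{ut}_k)$. The coproduct is $\Delta(\alpha)=\sum_{A\subseteq\{1,\dots,N\}}\mathrm{Dela}_A(\alpha)$.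 *)

(* Defs.v *)
From HB Require Import structures.
From mathcomp Require Import all_boot all_order all_algebra fingroup perm algC.
Set Implicit Arguments. Unset Strict Implicit. Unset Printing Implicit Defensive.
Import GRing.Theory Num.Theory.
Local Open Scope ring_scope.

(* Conventions: indices are 0-based ordinals 'I_N; the ordinal i represents
   the paper's index i+1.  All differences/comparisons used by the paper are
   shift-invariant, except c_i and the dual inversion table, where we shift
   explicitly (i.+1). *)

Section Defs.
Variable F : finFieldType.

Definition ut (N : nat) : {set 'M[F]_N} :=
  [set x : 'M[F]_N | [forall i, forall j, (x i j != 0) ==> (i < j)%N]].

Definition invc (N : nat) (w : 'S_N) (k : 'I_N) : nat :=
  #|[set i : 'I_N | (i < (w^-1)%g k)%N && (k < w i)%N]|.

Definition utw (N : nat) (w : 'S_N) : {set 'M[F]_N} :=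
  [set x : 'M[F]_N | [forall i, forall j,
     (x i j != 0) ==> ((i < j)%N && (j <= i + invc w i)%N)]].

(* character of Ind_{ut_w}^{ut_N}(1), by the induced character formula
   Ind phi (x) = |H|^-1 sum_{g in G} phi°(g x g^-1) (additive notation) *)
Definition chibar (N : nat) (w : 'S_N) (x : 'M[F]_N) : algC :=
  (#|utw w|%:R)^-1 * \sum_(g in ut N) ((g + x - g \in utw w) : nat)%:R.

Section Dela.
Variables (N k : nat) (A : {set 'I_N}).

Definition cA (i : 'I_N) : nat := (N - #|[set a in A | (i < a)%N]|)%N.

Definition inU (i j : 'I_N) : bool := [&& i \in A, (cA i < j.+1)%N & (i < j)%N].
Definition inL (i j : 'I_N) : bool := [&& i \in A, (j.+1 <= cA i)%N & (i < j)%N].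
Definition inUv (i j : 'I_N) : bool := [&& i \notin A, (j.+1 <= cA i)%N & (i < j)%N].
Definition inR (i j : 'I_N) : bool := [&& i \notin A, (cA i < j.+1)%N & (i < j)%N].

Definition suppg (P : 'I_N -> 'I_N -> bool) : {set 'M[F]_N} :=
  [set x : 'M[F]_N | [forall i, forall j, (x i j != 0) ==> P i j]].

Definition npos (P : 'I_N -> 'I_N -> bool) : nat :=
  #|[set p : 'I_N * 'I_N | P p.1 p.2]|.

Definition sA (i : 'I_N) : nat := #|[set a in A | (a < i)%N]|.
Definition tA (i : 'I_N) : nat := #|[set b | (b \notin A) && (b < i)%N]|.

(* ut_A^v -> ut_m,  e_ij(t) |-> e_{i-s, j-s}(t), extended additively *)
Definition phiA (x : 'M[F]_N) : 'M[F]_(N - k) :=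
  \matrix_(i', j') \sum_(i : 'I_N) \sum_(j : 'I_N |
      [&& inUv i j, (i - sA i == i')%N & (j - sA i == j')%N]) x i j.

(* ut_A -> ut_k,  e_ij(t) |-> e_{i - #{b<i, b notin A}, j - m}(t) *)
Definition psiA (y : 'M[F]_N) : 'M[F]_k :=
  \matrix_(i', j') \sum_(i : 'I_N) \sum_(j : 'I_N |
      [&& inU i j, (i - tA i == i')%N & (j - (N - k) == j')%N]) y i j.

Definition nnz (r : 'M[F]_N) : nat := #|[set p : 'I_N * 'I_N | r p.1 p.2 != 0]|.

(* Dela_A(gamma)(u', u), meaningful for #|A| = k *)
Definition Dela (gamma : 'M[F]_N -> algC) (u' : 'M[F]_(N - k)) (u : 'M[F]_k)
  : algC :=
  ((#|F|%:R : algC) ^- (npos inL + npos inR)) *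
  \sum_(l in suppg inL) \sum_(r in suppg inR)
  \sum_(x in suppg inUv | phiA x == u') \sum_(y in suppg inU | psiA y == u)
     ((- 1 / (#|F|%:R - 1)) ^+ nnz r * gamma (l + x + y + r)).

End Dela.

(* degree-(N-k, k) component of Delta(gamma) = sum_A Dela_A(gamma) *)
Definition Delta (N : nat) (gamma : 'M[F]_N -> algC) (k : nat)
  (u' : 'M[F]_(N - k)) (u : 'M[F]_k) : algC :=
  \sum_(A : {set 'I_N} | #|A| == k) Dela A gamma u' u.

End Defs.

Definition invtab (l : nat) (y : 'S_l) : seq nat := [seq invc y i | i : 'I_l <- enum 'I_l].
Definition dinvtab (l : nat) (y : 'S_l) : seq nat :=
  [seq (l - i.+1 - invc y i)%N | i : 'I_l <- enum 'I_l].

Definition sub_invtab (N : nat) (w : 'S_N) (B : {set 'I_N}) : seq nat :=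
  [seq invc w b | b <- enum B].

Definition is_invtable (c : seq nat) : bool :=
  all (fun i => nth 0%N c i <= size c - i.+1)%N (iota 0 (size c)).

Definition yB (N : nat) (w : 'S_N) (A : {set 'I_N}) (k : nat) : 'S_(N - k) :=
  odflt 1%g [pick y : 'S_(N - k) | invtab y == sub_invtab w (~: A)].

Definition uA (N : nat) (w : 'S_N) (A : {set 'I_N}) (k : nat) : 'S_k :=
  odflt 1%g [pick u : 'S_k | dinvtab u ==
     [seq minn (N - (p.2 : 'I_N).+1 - invc w p.2) (k - p.1.+1)
        | p <- zip (iota 0 k) (enum A)]].

Arguments Delta {F N} gamma k u' u.
Arguments Dela {F N} k A gamma u' u.
Arguments ut F N.

(* Main.v *)
Require Import Defs.
From mathcomp Require Import all_boot all_order all_algebra fingroup perm algC.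
From mathcomp Require Import zify ring.
Set Implicit Arguments. Unset Strict Implicit. Unset Printing Implicit Defensive.
Import GRing.Theory Num.Theory.
Local Open Scope ring_scope.

Section Supp.
Variables (F : finFieldType) (N : nat).
Implicit Types (P Q : 'I_N -> 'I_N -> bool) (x y : 'M[F]_N).

Lemma suppgP P x : reflect (forall i j, x i j != 0 -> P i j) (x \in suppg F P).
Proof.
rewrite inE; apply: (iffP forallP) => [H i j|H i].
  by move=> nz; have /forallP/(_ j)/implyP := H i; apply.
by apply/forallP => j; apply/implyP; apply: H.
Qed.

Lemma suppg0 P x : x \in suppg F P -> forall i j, ~~ P i j -> x i j = 0.
Proof. by move/suppgP => H i j; apply: contraNeq; apply: H. Qed.

Lemma card_suppg P : #|suppg F P| = (#|F| ^ npos P)%N.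
Proof.
pose f (x : 'M[F]_N) : {ffun 'I_N * 'I_N -> F} := [ffun p => x p.1 p.2].
have finj : injective f.
  by move=> x y /ffunP E; apply/matrixP => i j; have := E (i, j); rewrite !ffunE.
rewrite -(card_in_imset (f := f) (D := suppg F P)); last by move=> ? ? _ _; apply: finj.
pose D := [set p : 'I_N * 'I_N | P p.1 p.2].
rewrite /npos -/D -[#|F|]/(#|[pred _ : F | true]|) -(card_pffun_on (0 : F)).
apply: eq_card => g; apply/imsetP/pffun_onP.
  move=> [x /suppgP Hx ->]; split; last by [].
  apply/subsetP => p; rewrite inE ffunE => nz; rewrite inE; exact: Hx.
move=> [/supportP Hs _]; exists (\matrix_(i, j) g (i, j)).
  apply/suppgP => i j; rewrite mxE; apply: contraR => Pij.
  by apply/eqP; apply: Hs; rewrite inE.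
by apply/ffunP => -[i j]; rewrite ffunE mxE.
Qed.

End Supp.
Section Supp2.
Variables (F : finFieldType) (N : nat).
Implicit Types (P Q : 'I_N -> 'I_N -> bool) (x y : 'M[F]_N).

Lemma suppgD P1 P2 Q x y : (forall i j, P1 i j -> P2 i j -> false) ->
  x \in suppg F P1 -> y \in suppg F P2 ->
  (x + y \in suppg F Q) = (x \in suppg F Q) && (y \in suppg F Q).
Proof.
move=> dis /suppgP Hx /suppgP Hy; apply/suppgP/andP => [H|[/suppgP H1 /suppgP H2] i j].
  split; apply/suppgP => i j nz; apply: H; rewrite mxE.
    have : y i j = 0 by apply/eqP; apply: contraT => /Hy P2ij; move: (dis i j (Hx _ _ nz) P2ij).
    by move->; rewrite addr0.
  have : x i j = 0 by apply/eqP; apply: contraT => /Hx P1ij; move: (dis i j P1ij (Hy _ _ nz)).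
  by move->; rewrite add0r.
rewrite mxE; have [->|nzx] := eqVneq (x i j) 0; first by rewrite add0r; apply: H2.
by move=> _; apply: H1.
Qed.

Lemma suppgU P1 P2 x y : x \in suppg F P1 -> y \in suppg F P2 ->
  x + y \in suppg F (fun i j => P1 i j || P2 i j).
Proof.
move=> /suppgP Hx /suppgP Hy; apply/suppgP => i j; rewrite mxE.
have [->|nzx] := eqVneq (x i j) 0; first by rewrite add0r => /Hy ->; rewrite orbT.
by rewrite Hx.
Qed.

Lemma suppgI P Q x : (x \in suppg F P) && (x \in suppg F Q) = (x \in suppg F (fun i j => P i j && Q i j)).
Proof.
apply/andP/suppgP => [[/suppgP H1 /suppgP H2] i j nz|H]; first by rewrite H1 ?H2.
by split; apply/suppgP => i j /H /andP[].
Qed.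

Lemma nnz_add x i0 j0 (t : F) : x i0 j0 = 0 ->
  nnz (x + t *: delta_mx i0 j0) = (nnz x + (t != 0%R))%N.
Proof.
move=> x0; rewrite /nnz.
have [->|nzt] := eqVneq t 0.
  by rewrite scale0r addr0 addn0.
set S := [set p | x p.1 p.2 != 0].
rewrite [in RHS](_ : _ + _ = #|(i0, j0) |: S|)%N; last first.
  by rewrite cardsU1 inE /= x0 eqxx addnC.
apply: eq_card => -[i j]; rewrite !inE /= !mxE /=.
case: (eqVneq i i0) => [->|ne] /=; last by rewrite mulr0 addr0 xpair_eqE (negbTE ne).
case: (eqVneq j j0) => [->|ne] /=; last by rewrite mulr0 addr0 xpair_eqE (negbTE ne) andbF.
by rewrite eqxx x0 add0r mulr1n mulr1 nzt.
Qed.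

Lemma alt_sum Q (a : algC) : 1 + (#|F|.-1)%:R * a = 0 -> (exists i j, Q i j) ->
  \sum_(r in suppg F Q) a ^+ nnz r = 0.
Proof.
move=> ha [i0 [j0 Q0]].
pose E : 'M[F]_N := delta_mx i0 j0.
rewrite (partition_big (fun r : 'M[F]_N => r i0 j0) predT) //=.
have step t : \sum_(r in suppg F Q | r i0 j0 == t) a ^+ nnz r =
   a ^+ (t != 0) * \sum_(r in suppg F Q | r i0 j0 == 0) a ^+ nnz r.
  rewrite mulr_sumr /E.
  rewrite (reindex (fun r => r + t *: E)) /=; last first.
    by apply: onW_bij; exists (fun r => r - t *: E) => r; rewrite ?addrK ?subrK.
  apply: eq_big => r.
    rewrite !mxE !eqxx /= mulr1n mulr1 -subr_eq0 addrK.
    have [r0|_] := eqVneq (r i0 j0) 0; rewrite ?andbF ?andbT //.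
    have Ed i j : (t *: E) i j = if (i == i0) && (j == j0) then t else 0.
      by rewrite /E !mxE; case: ((i == i0) && (j == j0)); rewrite ?mulr1n ?mulr0n ?mulr1 ?mulr0.
    apply/suppgP/suppgP => H i j.
      move=> nz; apply: H; rewrite mxE Ed; case: ifP => [/andP[/eqP ei /eqP ej]|_].
        by move: nz; rewrite ei ej r0 eqxx.
      by rewrite addr0.
    rewrite mxE Ed; case: ifP => [/andP[/eqP -> /eqP ->]|_]; first by move=> _.
    by rewrite addr0; apply: H.
  move=> /andP[_]; rewrite !mxE !eqxx /= mulr1n mulr1 -subr_eq0 addrK => /eqP r0.
  by rewrite /E nnz_add // exprD mulrC.
under eq_bigr do rewrite step.
rewrite -mulr_suml.
rewrite (bigD1 0) //= eqxx expr0.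
under eq_bigr => t nt do rewrite nt expr1.
by rewrite sumr_const cardC1 -mulr_natl ha mul0r.
Qed.

End Supp2.
Section Reidx.
Variables (F : finFieldType) (N1 N2 : nat).

Definition rmap (R : 'I_N1 -> 'I_N1 -> 'I_N2 -> 'I_N2 -> bool) (x : 'M[F]_N1) : 'M[F]_N2 :=
  \matrix_(a, b) \sum_(i : 'I_N1) \sum_(j : 'I_N1 | R i j a b) x i j.

Variable R : 'I_N1 -> 'I_N1 -> 'I_N2 -> 'I_N2 -> bool.
Definition inj_rel := forall i j a b c d, R i j a b -> R c d a b -> i = c /\ j = d.

Lemma rmapE (Hinj : inj_rel) x a b i j : R i j a b -> rmap R x a b = x i j.
Proof.
move=> Rij; rewrite mxE (bigD1 i) //= (bigD1 j) //= big1 ?addr0.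
  rewrite big1 ?addr0 // => i' ne; apply: big1 => j' R'.
  by have [ei _] := Hinj _ _ _ _ _ _ Rij R'; move: ne; rewrite ei eqxx.
move=> j' /andP[R' ne]; have [_ ej] := Hinj _ _ _ _ _ _ Rij R'.
by move: ne; rewrite ej eqxx.
Qed.

Lemma rmapE0 x a b : (forall i j, ~~ R i j a b) -> rmap R x a b = 0.
Proof.
by move=> H; rewrite mxE big1 // => i _; apply: big1 => j Rj; move: (H i j); rewrite Rj.
Qed.

Lemma rmapP x a b : inj_rel ->
  (exists i j, R i j a b /\ rmap R x a b = x i j) \/
  ((forall i j, ~~ R i j a b) /\ rmap R x a b = 0).
Proof.
move=> Hinj; case: (boolP [exists i, exists j, R i j a b]).
  move=> /existsP[i /existsP[j Rij]]; left; exists i, j; split => //; exact: rmapE.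
move=> H; right; suff H' : forall i j, ~~ R i j a b by split => //; apply: rmapE0.
move=> i j; apply/negP => Rij; move/negP: H; apply; apply/existsP; exists i; apply/existsP; by exists j.
Qed.

End Reidx.

Definition trel N1 N2 (R : 'I_N1 -> 'I_N1 -> 'I_N2 -> 'I_N2 -> bool) :=
  fun a b i j => R i j a b.

Section Reidx2.
Variables (F : finFieldType) (N1 N2 : nat).
Variable R : 'I_N1 -> 'I_N1 -> 'I_N2 -> 'I_N2 -> bool.
Variables (P : 'I_N1 -> 'I_N1 -> bool) (Q : 'I_N2 -> 'I_N2 -> bool).
Hypothesis Hinj : inj_rel R.
Hypothesis Hfun : inj_rel (trel R).
Hypothesis HRP : forall i j a b, R i j a b -> P i j.
Hypothesis HRQ : forall i j a b, R i j a b -> Q a b.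
Hypothesis HP : forall i j, P i j -> exists a b, R i j a b.
Hypothesis HQ : forall a b, Q a b -> exists i j, R i j a b.

Lemma rmap_supp2 (P2 : 'I_N1 -> 'I_N1 -> bool) (Q2 : 'I_N2 -> 'I_N2 -> bool) :
  (forall i j a b, R i j a b -> P2 i j = Q2 a b) ->
  forall x : 'M[F]_N1, x \in suppg F P ->
  (rmap R x \in suppg F Q2) = (x \in suppg F P2).
Proof.
move=> H2 x /suppgP xP; apply/suppgP/suppgP => H i j.
  move=> nz; have [a [b Rij]] := HP (xP _ _ nz).
  by rewrite (H2 _ _ _ _ Rij); apply: H; rewrite (rmapE Hinj _ Rij).
have [[i' [j' [Rij ->]]]|[_ ->]] := rmapP x i j Hinj; last by rewrite eqxx.
by move/H; rewrite (H2 _ _ _ _ Rij).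
Qed.

Lemma rmapK (y : 'M[F]_N2) : y \in suppg F Q -> rmap R (rmap (trel R) y) = y.
Proof.
move=> /suppgP yQ; apply/matrixP => a b.
have [[i [j [Rij ->]]]|[nR ->]] := rmapP (rmap (trel R) y) a b Hinj.
  by rewrite (rmapE Hfun _ (Rij : trel R a b i j)).
apply/esym/eqP; apply: contraT => /yQ /HQ [i [j Rij]].
by move: (nR i j); rewrite Rij.
Qed.

End Reidx2.
Definition good_rel N1 N2 (R : 'I_N1 -> 'I_N1 -> 'I_N2 -> 'I_N2 -> bool)
  (P : 'I_N1 -> 'I_N1 -> bool) (Q : 'I_N2 -> 'I_N2 -> bool) :=
  [/\ inj_rel R, inj_rel (trel R), (forall i j a b, R i j a b -> P i j),
      (forall i j a b, R i j a b -> Q a b) &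
      (forall i j, P i j -> exists a b, R i j a b) /\
      (forall a b, Q a b -> exists i j, R i j a b)].

Section Reidx3.
Variables (F : finFieldType) (N1 N2 : nat).
Variable R : 'I_N1 -> 'I_N1 -> 'I_N2 -> 'I_N2 -> bool.
Variables (P : 'I_N1 -> 'I_N1 -> bool) (Q : 'I_N2 -> 'I_N2 -> bool).

Lemma good_relT : good_rel R P Q -> good_rel (trel R) Q P.
Proof.
rewrite /good_rel; case=> Hi Hf HRP HRQ [HP HQ].
split; [exact: Hf | exact: Hi | move=> i j a b H; exact: (HRQ _ _ _ _ H)
       | move=> i j a b H; exact: (HRP _ _ _ _ H) | split; [exact: HQ | exact: HP]].
Qed.

Lemma rmap_in (g : good_rel R P Q) (y : 'M[F]_N2) :
  y \in suppg F Q -> rmap (trel R) y \in suppg F P.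
Proof.
case: (g) => Hi Hf HRP HRQ [HP HQ] yQ.
by rewrite (@rmap_supp2 F N2 N1 (trel R) Q Hf HQ Q P) // => a b i j Rt; rewrite (HRP _ _ _ _ Rt) (HRQ _ _ _ _ Rt).
Qed.

End Reidx3.

Section Reidx4.
Variables (F : finFieldType) (N1 N2 : nat).
Variable R : 'I_N1 -> 'I_N1 -> 'I_N2 -> 'I_N2 -> bool.
Variables (P : 'I_N1 -> 'I_N1 -> bool) (Q : 'I_N2 -> 'I_N2 -> bool).
Lemma rmap_out (g : good_rel R P Q) (x : 'M[F]_N1) :
  x \in suppg F P -> rmap R x \in suppg F Q.
Proof. move=> xP; exact: (@rmap_in F N2 N1 (trel R) Q P (good_relT g) x xP). Qed.

Lemma rmap_sum (g : good_rel R P Q) (y : 'M[F]_N2) (f : 'M[F]_N1 -> algC) :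
  y \in suppg F Q ->
  \sum_(x in suppg F P | rmap R x == y) f x = f (rmap (trel R) y).
Proof.
case: (g) => Hi Hf HRP HRQ [HP HQ] yQ.
rewrite (big_pred1 (rmap (trel R) y)) // => x /=.
apply/andP/eqP => [[xP /eqP <-]|->].
  by rewrite (@rmapK F N2 N1 (trel R) P Hf Hi HP).
split; first exact: (rmap_in g yQ).
by rewrite (rmapK Hi Hf HQ).
Qed.

Lemma rmap_card (g : good_rel R P Q) (P2 : 'I_N1 -> 'I_N1 -> bool) (Q2 : 'I_N2 -> 'I_N2 -> bool) :
  (forall i j a b, R i j a b -> P2 i j = Q2 a b) ->
  #|suppg F (fun a b => Q a b && Q2 a b)| = #|suppg F (fun i j => P i j && P2 i j)|.
Proof.
case: (g) => Hi Hf HRP HRQ [HP HQ] H2.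
rewrite -(card_in_imset (f := rmap R)); last first.
  move=> x1 x2; rewrite -!suppgI => /andP[x1P _] /andP[x2P _] E.
  by rewrite -(@rmapK F N2 N1 (trel R) P Hf Hi HP x1) // E (@rmapK F N2 N1 (trel R) P Hf Hi HP x2).
apply: eq_card => y; apply/idP/imsetP; last first.
  move=> [x]; rewrite -!suppgI => /andP[xP xP2] ->.
  by rewrite (rmap_out g xP) (rmap_supp2 Hi HP H2 xP).
rewrite -!suppgI => /andP[yQ yQ2]; exists (rmap (trel R) y); last by rewrite (rmapK Hi Hf HQ).
rewrite -suppgI (rmap_in g yQ) /=.
rewrite (@rmap_supp2 F N2 N1 (trel R) Q Hf HQ Q2 P2) // => a b i j Rt; by rewrite (H2 _ _ _ _ Rt).
Qed.

End Reidx4.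
Section EnumOrd.
Variable N : nat.

Lemma count_iota_lt i n : (i <= n)%N -> count (fun j => (j < i)%N) (iota 0 n) = i.
Proof.
move=> le; rewrite -(subnKC le) iotaD count_cat add0n.
rewrite (eq_in_count (a2 := predT)) ?count_predT ?size_iota; last first.
  by move=> j; rewrite mem_iota add0n => /andP[_ ->].
rewrite (eq_in_count (a2 := pred0)) ?count_pred0 ?addn0 //.
by move=> j; rewrite mem_iota => /andP[h _] /=; rewrite ltnNge h.
Qed.

Lemma enum_sorted (B : {set 'I_N}) : sorted (fun x y : 'I_N => (x < y)%N) (enum B).
Proof.
rewrite /enum_mem; apply: sorted_filter; first by move=> x y z; apply: ltn_trans.
rewrite -enumT; have := iota_ltn_sorted 0 N; rewrite -val_enum_ord sorted_map.
by [].
Qed.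

Lemma card_lt_nth (B : {set 'I_N}) x0 i : (i < #|B|)%N ->
  #|[set c in B | (c < nth x0 (enum B) i)%N]| = i.
Proof.
move=> ilt; set s := enum B; set b := nth x0 s i.
have ss : size s = #|B| by rewrite /s cardE.
rewrite -sum1_card (eq_bigl (fun c => (c \in B) && (c < b)%N)); last by move=> c; rewrite inE.
rewrite -big_enum_cond sum1_count -/s.
rewrite -{1}(mkseq_nth x0 s) /mkseq count_map.
have srt := enum_sorted B.
have tr : transitive (fun x y : 'I_N => (x < y)%N) by move=> x y z; apply: ltn_trans.
rewrite (eq_in_count (a2 := fun j => (j < i)%N)); last first.
  move=> j; rewrite mem_iota add0n /= => jlt.
  case: (ltngtP j i) => [ji|ij|->]; last by rewrite ltnn.
    by rewrite (sorted_ltn_nth tr x0 srt) // inE ?ss.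
  apply/negbTE; rewrite -leqNgt ltnW //.
  by rewrite (sorted_ltn_nth tr x0 srt) // inE ?ss.
by rewrite count_iota_lt // ss ltnW.
Qed.

Lemma nth_card_lt (B : {set 'I_N}) x0 b : b \in B ->
  nth x0 (enum B) #|[set c in B | (c < b)%N]| = b.
Proof.
move=> bB; have bs : b \in enum B by rewrite mem_enum.
have := index_mem b (enum B); rewrite bs -cardE => ilt.
have := card_lt_nth x0 ilt; rewrite nth_index // => ->.
exact: nth_index.
Qed.

Lemma card_lt_ord (i : 'I_N) : #|[set c : 'I_N | (c < i)%N]| = i.
Proof.
have := @card_lt_nth [set: 'I_N] i i; rewrite cardsT card_ord ltn_ord => /(_ isT).
rewrite enum_setT -enumT nth_ord_enum => E.
by apply: etrans E; apply: eq_card => c; rewrite !inE.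
Qed.

End EnumOrd.
Section Comb.
Variables (N k : nat) (A : {set 'I_N}).
Hypothesis hA : #|A| = k.

Lemma kN : (k <= N)%N.
Proof. by rewrite -hA; apply: leq_trans (max_card _) _; rewrite card_ord. Qed.

Lemma F1 (i : 'I_N) : (sA A i + tA A i)%N = i.
Proof.
apply: etrans _ (card_lt_ord i); rewrite -(cardsID A [set c : 'I_N | (c < i)%N]).
congr addn; apply: eq_card => c; rewrite !inE //.
by rewrite andbC.
Qed.

Lemma F2 (i : 'I_N) : (sA A i + #|[set a in A | (i < a)%N]| + (i \in A))%N = k.
Proof.
rewrite -hA -(cardsID [set c : 'I_N | (c < i)%N] A) (cardsD1 i (A :\: _)).
rewrite -addnA [(#|_| + (i \in A))%N]addnC; congr (_ + (_ + _))%N.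
- by rewrite /sA; apply: eq_card => c; rewrite !inE.
- by rewrite !inE ltnn.
- apply: eq_card => c; rewrite !inE; case: (ltngtP c i) => [ci|ic|ci] /=.
  + by rewrite !andbF.
  + by rewrite andbT neq_ltn ic orbT.
  + by rewrite andbF (_ : c == i) //; apply/eqP/val_inj.
Qed.

Lemma cA_eq (i : 'I_N) : cA A i = (N - (k - sA A i - (i \in A)))%N.
Proof.
have := F2 i; rewrite /cA.
have -> : #|[set a in A | (i < a)%N]| = #|[set a in A | (i < a)%N]| by [].
move=> f2; congr (N - _)%N.
suff e : #|[set a in A | (i < a)%N]| = #|[set a0 in A | (i < a0)%N]| by lia.
by apply: eq_card => c; rewrite !inE.
Qed.

Lemma cardC : #|~: A| = (N - k)%N.
Proof. have := cardsC A; rewrite card_ord hA => E; lia. Qed.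

Lemma tA_le (i : 'I_N) : (tA A i <= N - k)%N.
Proof. by rewrite -cardC; apply: subset_leq_card; apply/subsetP => c; rewrite !inE => /andP[]. Qed.

Lemma tA_eq (i : 'I_N) : tA A i = #|[set c in ~: A | (c < i)%N]|.
Proof. by apply: eq_card => c; rewrite !inE. Qed.

Lemma nth_tA x0 (i : 'I_N) : i \notin A -> nth x0 (enum (~: A)) (tA A i) = i.
Proof. by move=> iA; rewrite tA_eq nth_card_lt // inE. Qed.

Lemma tA_nth x0 a : (a < N - k)%N -> tA A (nth x0 (enum (~: A)) a) = a.
Proof. by move=> alt; rewrite tA_eq card_lt_nth // cardC. Qed.

Lemma nth_sA x0 (i : 'I_N) : i \in A -> nth x0 (enum A) (sA A i) = i.
Proof. by move=> iA; rewrite nth_card_lt. Qed.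

Lemma sA_nth x0 a : (a < k)%N -> sA A (nth x0 (enum A) a) = a.
Proof. by move=> alt; rewrite /sA card_lt_nth // hA. Qed.

Lemma nth_notin x0 a : (a < N - k)%N -> nth x0 (enum (~: A)) a \notin A.
Proof.
move=> alt; have : nth x0 (enum (~: A)) a \in enum (~: A) by rewrite mem_nth // -cardE cardC.
by rewrite mem_enum inE.
Qed.

Lemma nth_in x0 a : (a < k)%N -> nth x0 (enum A) a \in A.
Proof.
move=> alt; have : nth x0 (enum A) a \in enum A by rewrite mem_nth // -cardE hA.
by rewrite mem_enum.
Qed.

End Comb.
Definition RUv N k (A : {set 'I_N}) (i j : 'I_N) (a b : 'I_(N - k)) : bool :=
  [&& inUv A i j, (i - sA A i == a)%N & (j - sA A i == b)%N].
Definition RU N k (A : {set 'I_N}) (i j : 'I_N) (a b : 'I_k) : bool :=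
  [&& inU A i j, (i - tA A i == a)%N & (j - (N - k) == b)%N].

Section Good.
Variables (N k : nat) (A : {set 'I_N}).
Hypothesis hA : #|A| = k.

Lemma good_RUv : good_rel (@RUv N k A) (inUv A) (fun a b : 'I_(N - k) => (a < b)%N).
Proof.
have kN := kN hA.
split.
- move=> i j a b c d /and3P[/and3P[iA _ ij] /eqP ea /eqP eb] /and3P[/and3P[cA' _ cd] /eqP ea' /eqP eb'].
  have f1 := F1 A i; have f1' := F1 A c.
  have et : tA A i = tA A c by lia.
  have ic : i = c by rewrite -(nth_tA i iA) et (nth_tA i cA').
  split => //; subst c; apply: ord_inj; lia.
- move=> a b i j c d /and3P[_ /eqP ea /eqP eb] /and3P[_ /eqP ea' /eqP eb'].
  by split; apply: ord_inj; lia.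
- by move=> i j a b /andP[].
- move=> i j a b /and3P[/and3P[_ _ ij] /eqP <- /eqP <-].
  have f1 := F1 A i; lia.
split.
- move=> i j /[dup] H /and3P[iA jc ij].
  have f1 := F1 A i; have f2 := F2 hA i; move: jc f2; rewrite /cA (negbTE iA) /= => jc f2.
  have la : (i - sA A i < N - k)%N by lia.
  have lb : (j - sA A i < N - k)%N by lia.
  by exists (Ordinal la), (Ordinal lb); rewrite /RUv H /= !eqxx.
- move=> a b ab.
  have aN : (a < N)%N by have := ltn_ord a; lia.
  pose i0 : 'I_N := Ordinal aN.
  pose i := nth i0 (enum (~: A)) a.
  have iA : i \notin A by apply: (nth_notin hA).
  have ta : tA A i = a by apply: (tA_nth hA).
  have f1 := F1 A i; have f2 := F2 hA i; rewrite (negbTE iA) /= in f2; have bl := ltn_ord b.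
  have jN : (b + sA A i < N)%N by have := ltn_ord b; lia.
  exists i, (Ordinal jN); rewrite /RUv /inUv /cA iA /=.
  apply/and3P; split.
  + apply/andP; split; [lia | lia].
  + apply/eqP; lia.
  + apply/eqP; lia.
Qed.

Lemma good_RU : good_rel (@RU N k A) (inU A) (fun a b : 'I_k => (a < b)%N).
Proof.
have kN := kN hA.
split.
- move=> i j a b c d /and3P[/and3P[iA ji ij] /eqP ea /eqP eb] /and3P[/and3P[cA' dc cd] /eqP ea' /eqP eb'].
  have f1 := F1 A i; have f1' := F1 A c.
  have f2 := F2 hA i; have f2' := F2 hA c.
  move: ji dc f2 f2'; rewrite /cA iA cA' /= => ji dc f2 f2'.
  have et : sA A i = sA A c by lia.
  have ic : i = c by rewrite -(nth_sA i iA) et (nth_sA i cA').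
  by split => //; subst c; apply: ord_inj; lia.
- move=> a b i j c d /and3P[_ /eqP ea /eqP eb] /and3P[_ /eqP ea' /eqP eb'].
  by split; apply: ord_inj; lia.
- by move=> i j a b /andP[].
- move=> i j a b /and3P[/and3P[iA ji ij] /eqP <- /eqP <-].
  have f1 := F1 A i; have f2 := F2 hA i; move: ji f2; rewrite /cA iA /= => ji f2; lia.
split.
- move=> i j /[dup] H /and3P[iA ji ij].
  have f1 := F1 A i; have f2 := F2 hA i; move: ji f2; rewrite /cA iA /= => ji f2.
  have la : (i - tA A i < k)%N by lia.
  have lb : (j - (N - k) < k)%N by have := ltn_ord j; lia.
  by exists (Ordinal la), (Ordinal lb); rewrite /RU H /= !eqxx.
- move=> a b ab.
  have aN : (a < N)%N by have := ltn_ord a; lia.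
  pose i0 : 'I_N := Ordinal aN.
  pose i := nth i0 (enum A) a.
  have iA : i \in A by apply: (nth_in hA).
  have sa : sA A i = a by apply: (sA_nth hA).
  have f1 := F1 A i; have f2 := F2 hA i; rewrite iA /= in f2; have bl := ltn_ord b.
  have tl := tA_le hA i.
  have jN : (b + (N - k) < N)%N by have := ltn_ord b; lia.
  exists i, (Ordinal jN); rewrite /RU /inU /cA iA /=.
  apply/and3P; split.
  + apply/andP; split; [lia | lia].
  + apply/eqP; lia.
  + apply/eqP; lia.
Qed.

End Good.
Lemma phiA_rmap (F : finFieldType) N k (A : {set 'I_N}) (x : 'M[F]_N) : phiA k A x = rmap (@RUv N k A) x.
Proof. reflexivity. Qed.
Lemma psiA_rmap (F : finFieldType) N k (A : {set 'I_N}) (x : 'M[F]_N) : psiA k A x = rmap (@RU N k A) x.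
Proof. reflexivity. Qed.
Section InvTab.

Lemma lift_ltn n (p : 'I_n.+1) (a b : 'I_n) : (lift p a < lift p b)%N = (a < b)%N.
Proof. rewrite /= /bump; case: (leqP p a); case: (leqP p b) => /= ? ?; lia. Qed.

Lemma invc_lift0 l (p : 'I_l.+1) (y : 'S_l) : invc (lift_perm p ord0 y) ord0 = p.
Proof.
set z := lift_perm p ord0 y.
have zp : z p = ord0 by rewrite lift_perm_id.
have zi : (z^-1)%g ord0 = p by rewrite -zp permK.
rewrite /invc zi -[RHS](card_lt_ord p); apply: eq_card => i; rewrite !inE.
case: (ltnP i p) => //= ip; rewrite lt0n; apply/negP => /eqP z0.
have : z i = z p by apply: ord_inj; rewrite zp z0.
by move/perm_inj => e; move: ip; rewrite e ltnn.
Qed.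

Lemma invc_liftS l (p : 'I_l.+1) (y : 'S_l) (k : 'I_l) :
  invc (lift_perm p ord0 y) (lift ord0 k) = invc y k.
Proof.
set z := lift_perm p ord0 y.
have zi : (z^-1)%g (lift ord0 k) = lift p ((y^-1)%g k).
  by apply: (perm_inj (s := z)); rewrite permKV /z lift_perm_lift permKV.
rewrite /invc zi.
rewrite -(card_imset _ (@lift_inj _ p)); apply: eq_card => i; rewrite !inE.
apply/idP/imsetP.
  case: (unliftP p i) => [i' ->|->].
    rewrite lift_ltn /z lift_perm_lift lift_ltn => H; exists i' => //; by rewrite inE.
  by rewrite /z lift_perm_id ltn0 andbF.
move=> [i' + ->]; rewrite inE lift_ltn /z lift_perm_lift lift_ltn; by [].
Qed.

Lemma invtab_exists l (c : seq nat) : size c = l ->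
  (forall i, (i < l)%N -> (nth 0 c i <= l - i.+1)%N) -> exists y : 'S_l, invtab y = c.
Proof.
elim: l c => [|l IH] [|c0 c] //=.
  by move=> _ _; exists 1%g; rewrite /invtab enum_ord0.
move=> [sc] H.
have [y' Hy'] : exists y' : 'S_l, invtab y' = c.
  apply: IH => // i il; have := H i.+1 il; by [].
have c0l : (c0 < l.+1)%N by have := H 0 isT; rewrite /= subn1 /=; lia.
exists (lift_perm (Ordinal c0l) ord0 y').
rewrite /invtab enum_ordSl /= invc_lift0 /=; congr (_ :: _).
by rewrite -Hy' /invtab -map_comp; apply: eq_map => i /=; rewrite invc_liftS.
Qed.

End InvTab.
Lemma invc_bound l (y : 'S_l) (i : 'I_l) : (invc y i <= l - i.+1)%N.
Proof.
have h1 : (invc y i <= #|[set x : 'I_l | (i < y x)%N]|)%N.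
  by apply: subset_leq_card; apply/subsetP => x; rewrite !inE => /andP[].
have h2 : #|[set x : 'I_l | (i < y x)%N]| = #|[set v : 'I_l | (i < v)%N]|.
  rewrite -(card_imset _ (@perm_inj _ y)); apply: eq_card => v; rewrite inE.
  apply/imsetP/idP => [[x + ->]|iv]; first by rewrite inE.
  by exists ((y^-1)%g v); rewrite ?inE permKV.
have h3 : (i.+1 <= #|~: [set v : 'I_l | (i < v)%N]|)%N.
  have e : #|i |: [set v : 'I_l | (v < i)%N]| = i.+1.
    by rewrite cardsU1 card_lt_ord inE ltnn.
  apply: (leq_trans (eq_leq (esym e))).
  apply: subset_leq_card; apply/subsetP => v; rewrite !inE.
  case/orP => [/eqP ->|]; first by rewrite ltnn.
  by move=> vi; rewrite -leqNgt ltnW.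
have h4 := cardsC [set v : 'I_l | (i < v)%N]; rewrite card_ord in h4.
lia.
Qed.

Section Spec.
Variables (N k : nat) (A : {set 'I_N}) (w : 'S_N).
Hypothesis hA : #|A| = k.

Lemma tA_lt (i : 'I_N) : i \notin A -> (tA A i < N - k)%N.
Proof.
move=> iA; rewrite tA_eq -(cardC hA).
have e : #|i |: [set c in ~: A | (c < i)%N]| = #|[set c in ~: A | (c < i)%N]|.+1.
  by rewrite cardsU1 !inE ltnn andbF.
apply: (leq_trans (eq_leq (esym e))).
by apply: subset_leq_card; apply/subsetP => v; rewrite !inE; case/orP => [/eqP ->|/andP[]].
Qed.

Lemma size_sub_invtab : size (sub_invtab w (~: A)) = (N - k)%N.
Proof. by rewrite /sub_invtab size_map -cardE (cardC hA). Qed.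

Lemma nth_sub_invtab (i : 'I_N) : i \notin A ->
  nth 0%N (sub_invtab w (~: A)) (tA A i) = invc w i.
Proof.
move=> iA; rewrite /sub_invtab (nth_map i); last by rewrite -cardE (cardC hA) // tA_lt.
by rewrite nth_tA.
Qed.

Lemma nth_invtab l (y : 'S_l) (a : 'I_l) : nth 0%N (invtab y) a = invc y a.
Proof. by rewrite /invtab (nth_map a) ?size_enum_ord // nth_ord_enum. Qed.

Lemma yB_spec : is_invtable (sub_invtab w (~: A)) ->
  invtab (yB w A k) = sub_invtab w (~: A).
Proof.
move=> inv; rewrite /yB; case: pickP => [y /eqP //|none].
have [y Hy] : exists y : 'S_(N - k), invtab y = sub_invtab w (~: A).
  apply: invtab_exists; first exact: size_sub_invtab.
  move=> i il; move/allP: inv => /(_ i); rewrite size_sub_invtab mem_iota add0n il.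
  by move/(_ isT).
by move: (none y); rewrite Hy eqxx.
Qed.

Definition Dseq := [seq minn (N - (p.2 : 'I_N).+1 - invc w p.2) (k - p.1.+1)
        | p <- zip (iota 0 k) (enum A)].

Lemma size_Dseq : size Dseq = k.
Proof. by rewrite size_map size_zip size_iota -cardE hA minnn. Qed.

Lemma nth_Dseq x0 a : (a < k)%N ->
  nth 0%N Dseq a = minn (N - (nth x0 (enum A) a).+1 - invc w (nth x0 (enum A) a)) (k - a.+1).
Proof.
move=> ak; rewrite /Dseq (nth_map (0%N, x0)); last by rewrite size_zip size_iota -cardE hA minnn.
by rewrite nth_zip /= ?size_iota -?cardE ?hA // nth_iota.
Qed.

Lemma uA_spec (a : 'I_k) x0 :
  invc (uA w A k) a = (k - a.+1 - minn (N - (nth x0 (enum A) a).+1 - invc w (nth x0 (enum A) a)) (k - a.+1))%N.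
Proof.
have key : forall u : 'S_k, dinvtab u = Dseq -> invc u a =
    (k - a.+1 - minn (N - (nth x0 (enum A) a).+1 - invc w (nth x0 (enum A) a)) (k - a.+1))%N.
  move=> u /(congr1 (fun s => nth 0%N s a)).
  rewrite (nth_Dseq x0 (ltn_ord a)) /dinvtab (nth_map a) ?size_enum_ord // nth_ord_enum.
  have := invc_bound u a; lia.
rewrite /uA; case: pickP => [u /eqP Hu|none]; first exact: key.
have [u Hu] : exists u : 'S_k, invtab u = [seq (k - i.+1 - nth 0 Dseq i)%N | i <- iota 0 k].
  apply: invtab_exists; first by rewrite size_map size_iota.
  by move=> i ik; rewrite (nth_map 0%N) ?size_iota // nth_iota //; lia.
suff : dinvtab u = Dseq by move=> E; move: (none u); rewrite -/Dseq E eqxx.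
apply: (@eq_from_nth _ 0%N); first by rewrite size_Dseq /dinvtab size_map size_enum_ord.
move=> i; rewrite /dinvtab size_map size_enum_ord => ik.
rewrite (nth_map (Ordinal ik)) ?size_enum_ord //.
have -> : nth (Ordinal ik) (enum 'I_k) i = Ordinal ik.
  by apply: ord_inj; rewrite nth_enum_ord.
rewrite -nth_invtab Hu (nth_map 0%N) ?size_iota // nth_iota //=.
have : (nth 0 Dseq i <= k - i.+1)%N.
  by rewrite (nth_Dseq x0 ik) geq_minr.
rewrite !add0n; lia.
Qed.

End Spec.
Definition allowed N (w : 'S_N) (i j : 'I_N) := (i < j)%N && (j <= i + invc w i)%N.

Lemma utwE F N (w : 'S_N) : utw F w = suppg F (allowed w).
Proof. by []. Qed.

Section Allowed.
Variables (N k : nat) (A : {set 'I_N}) (w : 'S_N).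
Hypothesis hA : #|A| = k.

Lemma allow_Uv : is_invtable (sub_invtab w (~: A)) ->
  forall i j (a b : 'I_(N - k)), @RUv N k A i j a b -> allowed w i j = allowed (yB w A k) a b.
Proof.
move=> inv i j a b /and3P[/and3P[iA jc ij] /eqnP ea /eqnP eb].
have f1 := F1 A i.
have ea' : (a : nat) = tA A i by lia.
have Hi : invc (yB w A k) a = invc w i.
  by rewrite -nth_invtab (yB_spec hA inv) ea' (nth_sub_invtab w hA).
rewrite /allowed Hi; apply/andP/andP => -[h1 h2]; split; lia.
Qed.

Lemma allow_U i j (a b : 'I_k) : @RU N k A i j a b -> allowed w i j = allowed (uA w A k) a b.
Proof.
move=> /and3P[/and3P[iA jc ij] /eqnP ea /eqnP eb].
have f1 := F1 A i; have f2 := F2 hA i; rewrite iA /= in f2.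
have sa : (a : nat) = sA A i by lia.
have ni : nth i (enum A) a = i by rewrite sa nth_sA.
have bd := invc_bound w i.
have kN := kN hA.
have jN := ltn_ord j; have tl := tA_le hA i.
rewrite (cA_eq hA) iA /= in jc.
rewrite /allowed (uA_spec w hA a i) ni; apply/andP/andP => -[h1 h2]; split. all: lia.
Qed.

Lemma R_empty : is_invtable (sub_invtab w (~: A)) ->
  forall i j, ~~ (inR A i j && allowed w i j).
Proof.
move=> inv i j; apply/negP => /andP[/and3P[iA jc ij] /andP[_ ja]].
have f1 := F1 A i; have f2 := F2 hA i; rewrite (negbTE iA) /= in f2.
have tl := tA_lt hA iA.
move/allP: inv => /(_ (tA A i)); rewrite (size_sub_invtab w hA) mem_iota add0n tl => /(_ isT).
rewrite (nth_sub_invtab w hA iA).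
rewrite (cA_eq hA) (negbTE iA) /= in jc.
lia.
Qed.

Lemma R_nonempty : ~~ is_invtable (sub_invtab w (~: A)) ->
  exists i j, inR A i j && allowed w i j.
Proof.
rewrite /is_invtable (size_sub_invtab w hA) => /allPn [a]; rewrite mem_iota add0n => al.
have kN := kN hA.
have aN : (a < N)%N by lia.
pose i0 : 'I_N := Ordinal aN.
pose i := nth i0 (enum (~: A)) a.
have iA : i \notin A by apply: (nth_notin hA).
have ta : tA A i = a by apply: (tA_nth hA).
rewrite -{1}ta (nth_sub_invtab w hA iA) -ltnNge => big.
have f1 := F1 A i; have f2 := F2 hA i; rewrite (negbTE iA) /= in f2.
have bd := invc_bound w i.
have jN : (i + invc w i < N)%N by have := ltn_ord i; lia.
exists i, (Ordinal jN); rewrite /inR /allowed (cA_eq hA) (negbTE iA) /=.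
apply/andP; split; [apply/andP; split|apply/andP; split]; lia.
Qed.

End Allowed.
Section Main.
Variable F : finFieldType.

Lemma chibarE N (w : 'S_N) (x : 'M[F]_N) :
  chibar w x = #|ut F N|%:R / #|utw F w|%:R * ((x \in utw F w) : nat)%:R.
Proof.
rewrite /chibar; under eq_bigr => g _ do rewrite addrC addKr.
by rewrite sumr_const -[_ *+ #|ut F N|]mulr_natl mulrCA mulrA.
Qed.

Lemma sum_bool (T : finType) (S : {set T}) (P : pred T) :
  \sum_(x in S) ((P x : nat)%:R : algC) = #|[set x in S | P x]|%:R.
Proof.
rewrite -[RHS]sumr_const big_mkcond [RHS]big_mkcond /=; apply: eq_bigr => x _.
by rewrite inE; case: (x \in S); case: (P x).
Qed.

Lemma suppg_ext N (P Q : 'I_N -> 'I_N -> bool) : (forall i j, P i j = Q i j) ->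
  suppg F P = suppg F Q.
Proof. by move=> E; apply/setP => x; apply/suppgP/suppgP => H i j /H; rewrite E. Qed.

Lemma npos_ext N (P Q : 'I_N -> 'I_N -> bool) : (forall i j, P i j = Q i j) -> npos P = npos Q.
Proof. by move=> E; apply: eq_card => p; rewrite !inE E. Qed.

Lemma npos0 N (P : 'I_N -> 'I_N -> bool) : (forall i j, ~~ P i j) -> npos P = 0%N.
Proof. by move=> E; apply: eq_card0 => p; rewrite !inE; apply/negbTE. Qed.

Lemma npos_sum N (P : 'I_N -> 'I_N -> bool) : npos P = (\sum_(p : 'I_N * 'I_N) P p.1 p.2)%N.
Proof.
rewrite /npos -sum1_card big_mkcond /=; apply: eq_bigr => p _; rewrite inE.
by case: (P p.1 p.2).
Qed.

Lemma npos_split N (A : {set 'I_N}) (P : 'I_N -> 'I_N -> bool) :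
  (forall i j, P i j -> (i < j)%N) ->
  npos P = (npos (fun i j => P i j && inL A i j) + npos (fun i j => P i j && inUv A i j)
           + npos (fun i j => P i j && inU A i j) + npos (fun i j => P i j && inR A i j))%N.
Proof.
move=> Plt; rewrite !npos_sum -!big_split /=; apply: eq_bigr => -[i j] _ /=.
rewrite /inL /inUv /inU /inR.
case Pij: (P i j) => //=; have ij := Plt _ _ Pij; rewrite ij !andbT.
case: (i \in A) => /=; case: (leqP j.+1 (cA A i)) => //.
Qed.

Lemma pow_nz (q : algC) n : q != 0 -> q ^+ n != 0.
Proof. by move=> h; rewrite expf_neq0. Qed.

End Main.
Section DelaVal.
Variables (F : finFieldType) (N k : nat) (A : {set 'I_N}) (w : 'S_N).
Hypothesis hA : #|A| = k.

Lemma disjLUv i j : inL A i j -> inUv A i j -> false.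
Proof. by move=> /and3P[h _ _] /and3P[h' _ _]; rewrite h in h'. Qed.
Lemma disjLUvU i j : inL A i j || inUv A i j -> inU A i j -> false.
Proof.
case/orP => [/and3P[_ h _]|/and3P[h _ _]] /and3P[h' h'' _]; last by rewrite h' in h.
by move: h''; rewrite ltnNge h.
Qed.
Lemma disjR i j : (inL A i j || inUv A i j) || inU A i j -> inR A i j -> false.
Proof.
case/orP => [/orP[]|]; move=> /and3P[h h2 _] /and3P[h' h'' _].
- by rewrite h in h'.
- by move: h''; rewrite ltnNge h2.
- by rewrite h in h'.
Qed.

Lemma Dela_val (u' : 'M[F]_(N - k)) (u : 'M[F]_k) :
  u' \in ut F (N - k) -> u \in ut F k ->
  Dela k A (chibar w) u' u =
  if is_invtable (sub_invtab w (~: A)) then chibar (yB w A k) u' * chibar (uA w A k) u else 0.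
Proof.
move=> hu' hu.
pose S := utw F w.
pose q : algC := #|F|%:R.
pose a : algC := -1 / (q - 1).
pose C : algC := #|ut F N|%:R / #|S|%:R.
have Hd : forall l r x y, l \in suppg F (inL A) -> r \in suppg F (inR A) ->
    x \in suppg F (inUv A) -> y \in suppg F (inU A) ->
    ((l + x + y + r \in S) : nat)%:R =
    ((l \in S) : nat)%:R * ((x \in S) : nat)%:R * ((y \in S) : nat)%:R * ((r \in S) : nat)%:R :> algC.
  move=> l r x y lL rR xU yU.
  have lx := suppgU lL xU; have lxy := suppgU lx yU.
  rewrite (suppgD _ disjR lxy rR) (suppgD _ disjLUvU lx yU) (suppgD _ disjLUv lL xU).
  by case: (l \in S); case: (x \in S); case: (y \in S); case: (r \in S); rewrite /= ?mulr0 ?mul0r ?mulr1.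
have E : \sum_(l in suppg F (inL A)) \sum_(r in suppg F (inR A))
      \sum_(x in suppg F (inUv A) | phiA k A x == u')
      \sum_(y in suppg F (inU A) | psiA k A y == u) (a ^+ nnz r * chibar w (l + x + y + r)) =
    C * \sum_(l in suppg F (inL A)) (((l \in S) : nat)%:R *
        \sum_(r in suppg F (inR A)) (a ^+ nnz r * ((r \in S) : nat)%:R *
        \sum_(x in suppg F (inUv A) | phiA k A x == u') (((x \in S) : nat)%:R *
         \sum_(y in suppg F (inU A) | psiA k A y == u) ((y \in S) : nat)%:R))).
  rewrite mulr_sumr; apply: eq_bigr => l lL.
  rewrite !mulr_sumr; apply: eq_bigr => r rR.
  rewrite !mulr_sumr; apply: eq_bigr => x /andP[xU _].
  rewrite !mulr_sumr; apply: eq_bigr => y /andP[yU _].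
  rewrite chibarE -/S (Hd _ _ _ _ lL rR xU yU) -/C.
  ring.
rewrite /Dela -/q -/a E {E}.
under eq_bigr => l _ do under eq_bigr => r _ do rewrite -mulr_suml.
under eq_bigr => l _ do rewrite -mulr_suml.
rewrite -mulr_suml.
have gt1 : (1 < #|F|)%N := card_finNzRing_gt1 F.
have qnz : q != 0 by rewrite /q pnatr_eq0; lia.
have h0 : (0 < #|F|)%N by lia.
have q1 : (#|F|.-1)%:R = q - 1 :> algC by rewrite /q -[in RHS](prednK h0) -natr1 addrK.
have q1nz : q - 1 != 0 by rewrite -q1 pnatr_eq0; lia.
have SLe : \sum_(l in suppg F (inL A)) ((l \in S) : nat)%:R =
    q ^+ npos (fun i j => inL A i j && allowed w i j).
  rewrite sum_bool (_ : [set l in _ | _] = suppg F (fun i j => inL A i j && allowed w i j)).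
    by rewrite card_suppg natrX.
  by apply/setP => l; rewrite inE /S utwE suppgI.
rewrite SLe.
have SRe : \sum_(r in suppg F (inR A)) a ^+ nnz r * ((r \in S) : nat)%:R =
    \sum_(r in suppg F (fun i j => inR A i j && allowed w i j)) a ^+ nnz r.
  rewrite big_mkcond [RHS]big_mkcond; apply: eq_bigr => r _.
  rewrite -(@suppgI F N (inR A) (allowed w) r) /S utwE.
  by case: (r \in suppg F (inR A)); case: (r \in suppg F (allowed w)); rewrite /= ?mulr1 ?mulr0.
rewrite SRe.
case: ifP => inv; last first.
  rewrite alt_sum ?mul0r ?mulr0 //.
    by rewrite q1 /a; field.
  by apply: R_nonempty => //; rewrite inv.
rewrite (big_pred1 0); last first.
  move=> r; apply/suppgP/eqP => [H|->]; last by move=> i j; rewrite mxE eqxx.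
  apply/matrixP => i j; rewrite mxE; apply/eqP; apply: contraT => /H.
  by move/negP: (R_empty hA inv i j).
have -> : nnz (0 : 'M[F]_N) = 0%N by apply: eq_card0 => p; rewrite !inE mxE eqxx.
rewrite expr0 mul1r.
have gUv := good_RUv hA.
case: (gUv) => Hi Hf _ _ [HP HQ].
have hQ : u' \in suppg F (fun a b : 'I_(N - k) => (a < b)%N) := hu'.
have -> : \sum_(x in suppg F (inUv A) | phiA k A x == u') ((x \in S) : nat)%:R =
    ((rmap (trel (@RUv N k A)) u' \in S) : nat)%:R :> algC.
  apply: (@etrans _ _ (\sum_(x in suppg F (inUv A) | rmap (@RUv N k A) x == u') ((x \in S) : nat)%:R)).
    by apply: eq_bigl => x; rewrite phiA_rmap.
  exact: (rmap_sum gUv (fun x => ((x \in S) : nat)%:R) hQ).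
have x0P := rmap_in gUv hQ.
have -> : (rmap (trel (@RUv N k A)) u' \in S) = (u' \in utw F (yB w A k)).
  rewrite /S !utwE -(rmap_supp2 Hi HP (allow_Uv hA inv) x0P).
  by rewrite (rmapK Hi Hf HQ hQ).
have gU := good_RU hA.
case: (gU) => Hi' Hf' _ _ [HP' HQ'].
have hQ' : u \in suppg F (fun a b : 'I_k => (a < b)%N) := hu.
have -> : \sum_(y in suppg F (inU A) | psiA k A y == u) ((y \in S) : nat)%:R =
    ((rmap (trel (@RU N k A)) u \in S) : nat)%:R :> algC.
  apply: (@etrans _ _ (\sum_(x in suppg F (inU A) | rmap (@RU N k A) x == u) ((x \in S) : nat)%:R)).
    by apply: eq_bigl => x; rewrite psiA_rmap.
  exact: (rmap_sum gU (fun x => ((x \in S) : nat)%:R) hQ').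
have y0P := rmap_in gU hQ'.
have -> : (rmap (trel (@RU N k A)) u \in S) = (u \in utw F (uA w A k)).
  rewrite /S !utwE -(rmap_supp2 Hi' HP' (allow_U w hA) y0P).
  by rewrite (rmapK Hi' Hf' HQ' hQ').
rewrite !chibarE /C.
have lt_inL i j : inL A i j -> (i < j)%N by case/and3P.
have lt_inR i j : inR A i j -> (i < j)%N by case/and3P.
have lt_inU i j : inU A i j -> (i < j)%N by case/and3P.
have lt_inUv i j : inUv A i j -> (i < j)%N by case/and3P.
have cN : #|ut F N| = (#|F| ^ (npos (inL A) + npos (inUv A) + npos (inU A) + npos (inR A)))%N.
  rewrite -[ut F N]/(suppg F (fun i j : 'I_N => (i < j)%N)) card_suppg (npos_split A) //.
  rewrite (npos_ext (P := fun i j : 'I_N => (i < j)%N && inL A i j) (Q := inL A)); last by move=> i j; apply/andP/idP => [[]|h] //; rewrite lt_inL.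
  rewrite (npos_ext (P := fun i j : 'I_N => (i < j)%N && inUv A i j) (Q := inUv A)); last by move=> i j; apply/andP/idP => [[]|h] //; rewrite lt_inUv.
  rewrite (npos_ext (P := fun i j : 'I_N => (i < j)%N && inU A i j) (Q := inU A)); last by move=> i j; apply/andP/idP => [[]|h] //; rewrite lt_inU.
  by rewrite (npos_ext (P := fun i j : 'I_N => (i < j)%N && inR A i j) (Q := inR A)) //; move=> i j; apply/andP/idP => [[]|h] //; rewrite lt_inR.
have cS : #|S| = (#|F| ^ (npos (fun i j => inL A i j && allowed w i j)
     + npos (fun i j => inUv A i j && allowed w i j) + npos (fun i j => inU A i j && allowed w i j)))%N.
  rewrite /S utwE card_suppg (npos_split A); last by move=> i j /andP[].
  rewrite (npos0 (P := fun i j => allowed w i j && inR A i j)); last first.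
    by move=> i j; rewrite andbC; apply: (R_empty hA inv).
  rewrite addn0; congr (_ ^ (_ + _ + _))%N; apply: npos_ext => ? ?; exact: andbC.
have cm : #|ut F (N - k)| = (#|F| ^ npos (inUv A))%N.
  rewrite -[ut F (N - k)]/(suppg F (fun a b : 'I_(N - k) => (a < b)%N)).
  rewrite (suppg_ext F (Q := fun a b : 'I_(N - k) => (a < b)%N && true)); last by move=> ? ?; rewrite andbT.
  rewrite (rmap_card F gUv (P2 := fun _ _ => true)) // card_suppg; congr (_ ^ _)%N.
  by apply: npos_ext => ? ?; rewrite andbT.
have cym : #|utw F (yB w A k)| = (#|F| ^ npos (fun i j => inUv A i j && allowed w i j))%N.
  rewrite utwE (suppg_ext F (Q := fun a b : 'I_(N - k) => (a < b)%N && allowed (yB w A k) a b)); last first.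
    by move=> a' b'; rewrite /allowed andbA andbb.
  by rewrite (rmap_card F gUv (allow_Uv hA inv)) card_suppg.
have ck : #|ut F k| = (#|F| ^ npos (inU A))%N.
  rewrite -[ut F k]/(suppg F (fun a b : 'I_k => (a < b)%N)).
  rewrite (suppg_ext F (Q := fun a b : 'I_k => (a < b)%N && true)); last by move=> ? ?; rewrite andbT.
  rewrite (rmap_card F gU (P2 := fun _ _ => true)) // card_suppg; congr (_ ^ _)%N.
  by apply: npos_ext => ? ?; rewrite andbT.
have cyk : #|utw F (uA w A k)| = (#|F| ^ npos (fun i j => inU A i j && allowed w i j))%N.
  rewrite utwE (suppg_ext F (Q := fun a b : 'I_k => (a < b)%N && allowed (uA w A k) a b)); last first.
    by move=> a' b'; rewrite /allowed andbA andbb.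
  by rewrite (rmap_card F gU (allow_U w hA)) card_suppg.
rewrite cN cS cm cym ck cyk !natrX -/q !exprD.
field.
by rewrite !expf_neq0.
Qed.


End DelaVal.
Unset Implicit Arguments.

Theorem theorem5p5 (F : finFieldType) (n : nat) (w : 'S_n) (k : nat)
  (u' : 'M[F]_(n - k)) (u : 'M[F]_k) :
  (k <= n)%N -> u' \in ut F (n - k) -> u \in ut F k ->
  Delta (chibar w) k u' u =
  \sum_(A : {set 'I_n} | (#|A| == k) && is_invtable (sub_invtab w (~: A)))
     chibar (yB w A k) u' * chibar (uA w A k) u.
Proof.
move=> _ hu' hu; rewrite /Delta [RHS]big_mkcondr /=.
by apply: eq_bigr => A /eqP hA; apply: Dela_val.
Qed.
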